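(* In the weighted picking sequence algorithm, for every step $s\in\{0,1,\ldots,m\}$ and all agents $i,j\in N$, $\left|\frac{t_i(s)}{w_i}-\frac{t_j(s)}{w_j}\right|\le\frac{1}{\min(w_i,w_j)}$. Moreover, for every step $s$ and every $i\in N$, $\left|t_i(s)-\frac{w_i}{W}\cdot s\right|\le\frac{w_i}{w_{\min}}$.
   Context: Agents $N=[n]$ with positive weights $w_i$, $W=\sum_iw_i$, $w_{\min}=\min_iw_i$; items $M=[m]$ with additive utilities. Weighted picking sequence algorithm: while items remain, an agent $i^*$ minimizing $t_i/w_i$ (ties broken arbitrarily), where $t_i$ is the number of items $i$ has picked so far, takes her most valued remaining item. Each iteration is a step; $t_i(s)$ is the number of items agent $i$ has picked in steps $1,\ldots,s$ (so $t_i(0)=0$). *)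

(* Defs.v *)
From mathcomp Require Import all_boot all_order all_algebra.
Set Implicit Arguments. Unset Strict Implicit. Unset Printing Implicit Defensive.
Import Order.TTheory GRing.Theory Num.Theory.
Local Open Scope ring_scope.

(* A run of the algorithm is the sequence of (picking agent, picked item)
   pairs, step 1 first. *)

Definition picks (N M : finType) (r : seq (N * M)) (i : N) (s : nat) : nat :=
  count (fun p => p.1 == i) (take s r).

Definition wsum (R : realFieldType) (N : finType) (w : N -> R) : R :=
  \sum_(k : N) w k.

(* w_min = minimum weight (0 if there are no agents, irrelevant case) *)
Definition wmin (R : realFieldType) (N : finType) (w : N -> R) : R :=
  if [pick k : N] is Some k0 then \big[Num.min/w k0]_(k : N) w k else 0.

(* r is a possible execution of the weighted picking sequence algorithm
   (with arbitrary tie-breaking) for weights w and additive utilities u: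
   it runs for exactly |M| steps (while items remain); at each step the
   picking agent a minimizes t_i/w_i, and takes a remaining item that she
   values most among the remaining items. *)
Definition wps_run (R : realFieldType) (N M : finType)
    (w : N -> R) (u : N -> M -> R) (r : seq (N * M)) : Prop :=
  size r = #|M| /\
  forall pre a x post, r = pre ++ (a, x) :: post ->
    [/\ forall j : N, (picks r a (size pre))%:R / w a
                      <= (picks r j (size pre))%:R / w j,
        x \notin map snd pre &
        forall y : M, y \notin map snd pre -> u a y <= u a x].

(* Main.v *)
Require Import Defs.
From mathcomp Require Import all_boot all_order all_algebra.
From mathcomp Require Import ring lra.
Import Order.TTheory GRing.Theory Num.Theory.
Local Open Scope ring_scope.

Lemma sum_count_fst (N M : finType) (l : seq (N * M)) :
  (\sum_(j : N) count (fun p => p.1 == j) l)%N = size l.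
Proof.
elim: l => [|p l IH] /=; first by rewrite big1.
rewrite big_split /= IH (bigD1 p.1) //= eqxx big1 // => j /negbTE.
by rewrite eq_sym => ->.
Qed.

Lemma picks_step (N M : finType) (r : seq (N * M)) pre a x post k :
  r = pre ++ (a, x) :: post ->
  picks r k (size pre).+1 = (picks r k (size pre) + (a == k))%N.
Proof.
move=> ->; rewrite /picks !take_cat !ltnNge leqnn leqnSn /= subnn subSnn take0 cats0.
by rewrite count_cat /= take0 addn0.
Qed.

Lemma inv (R : realFieldType) (N M : finType)
    (w : N -> R) (u : N -> M -> R) (r : seq (N * M)) :
  (forall i : N, 0 < w i) -> wps_run w u r ->
  forall s i j, ((picks r i s)%:R - 1) / w i <= (picks r j s)%:R / w j.
Proof.
move=> wp [_ Hr]; elim=> [|s IH] i j.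
  rewrite /picks take0 /= mul0r sub0r mulNr mul1r oppr_le0.
  by rewrite invr_ge0 ltW.
have [lts|ges] := ltnP s (size r); last first.
  have e : forall k, picks r k s.+1 = picks r k s.
    by move=> k; rewrite /picks !take_oversize ?(leq_trans ges).
  by rewrite !e; apply: IH.
have hd : r = take s r ++ drop s r by rewrite cat_take_drop.
case E : (drop s r) hd => [|[a x] post] hd.
  by move: (congr1 size E); rewrite size_drop /= => /eqP; rewrite subn_eq0 leqNgt lts.
have sz : size (take s r) = s by rewrite size_take lts.
have := @picks_step _ _ _ _ _ _ _ i hd; have := @picks_step _ _ _ _ _ _ _ j hd; rewrite sz => -> ->.
have [Ha _ _] := Hr _ _ _ _ hd; rewrite sz in Ha.
have Hj : (picks r j s)%:R / w j <= (picks r j s + (a == j))%:R / w j.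
  by rewrite ler_pM2r ?invr_gt0 // ler_nat leq_addr.
apply: le_trans Hj.
case: eqP => [<-|_]; last by rewrite addn0; apply: IH.
by rewrite addn1 -addn1 natrD addrK; apply: Ha.
Qed.

Theorem lemma8 (R : realFieldType) (N M : finType)
    (w : N -> R) (u : N -> M -> R) (r : seq (N * M)) :
  (forall i : N, 0 < w i) ->
  wps_run w u r ->
  (forall (s : nat) (i j : N), (s <= #|M|)%N ->
     `|(picks r i s)%:R / w i - (picks r j s)%:R / w j|
       <= 1 / Num.min (w i) (w j)) /\
  (forall (s : nat) (i : N), (s <= #|M|)%N ->
     `|(picks r i s)%:R - w i / wsum w * s%:R| <= w i / wmin w).
Proof.
move=> wp run; have I := @inv R N M w u r wp run.
have key : forall s i j, (picks r i s)%:R / w i - (picks r j s)%:R / w j <= 1 / w i.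
  move=> s i j; have := I s i j; rewrite mulrBl; lra.
split.
  move=> s i j _; set m := Num.min (w i) (w j).
  have m0 : 0 < m by rewrite lt_min !wp.
  have mi : 1 / w i <= 1 / m by rewrite !mul1r lef_pV2 ?posrE ?wp // ge_min lexx.
  have mj : 1 / w j <= 1 / m by rewrite !mul1r lef_pV2 ?posrE ?wp // ge_min lexx orbT.
  rewrite ler_norml; apply/andP; split.
    by rewrite lerNl opprB; apply: le_trans mj; apply: key.
  by apply: le_trans mi; apply: key.
move=> s i hs.
have [mpos mle] : 0 < wmin w /\ forall j, wmin w <= w j.
  rewrite /wmin; case: pickP => [k0 _|/(_ i)//].
  split; first by apply: lt_bigmin => // j _; apply: wp.
  by move=> j; apply: bigmin_le.
have Wi : w i <= wsum w.
  rewrite /wsum (bigD1 i) //= lerDl sumr_ge0 // => k _; exact: ltW.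
have W0 : 0 < wsum w by apply: lt_le_trans Wi.
have Hs : s%:R = \sum_(j : N) ((picks r j s)%:R : R).
  rewrite -natr_sum; congr (_%:R); rewrite /picks sum_count_fst size_takel //.
  by case: run => -> _.
set x := ((picks r i s)%:R : R).
have H1 : (x - 1) / w i * wsum w <= s%:R.
  rewrite /wsum mulr_sumr Hs; apply: ler_sum => j _.
  by rewrite -ler_pdivlMr ?wp //; apply: I.
have H2 : s%:R <= wsum w * (x / w i + 1 / wmin w).
  rewrite /wsum mulr_suml Hs; apply: ler_sum => j _.
  rewrite mulrC -ler_pdivrMr ?wp //.
  have := I s j i; rewrite mulrBl lerBlDr => /le_trans; apply.
  rewrite lerD2l !mul1r lef_pV2 ?posrE ?wp //.
have Ai : 1 <= w i / wmin w by rewrite ler_pdivlMr // mul1r.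
have A0 := wp i.
rewrite ler_norml; apply/andP; split.
  rewrite lerNl opprB lerBlDl.
  have : w i / wsum w * s%:R <= w i / wsum w * (wsum w * (x / w i + 1 / wmin w)).
    by apply: ler_wpM2l => //; apply: divr_ge0; apply: ltW.
  move/le_trans; apply; rewrite le_eqVlt; apply/orP; left; apply/eqP; field.
  by rewrite !gt_eqF.
apply: le_trans Ai; rewrite lerBlDl addrC -lerBlDl.
have : w i / wsum w * ((x - 1) / w i * wsum w) <= w i / wsum w * s%:R.
  by apply: ler_wpM2l => //; apply: divr_ge0; apply: ltW.
apply: le_trans; rewrite le_eqVlt; apply/orP; left; apply/eqP; field.
by rewrite !gt_eqF.
Qed.
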